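(* Let $n\in\{1,\dots,5\}$. Every homogeneous invariant $F\in K[X_n]^{G_n}$ of degree $d$ is an invariant of weight $k$, where $d=k$ if $n=1,2,3$, $d=2k$ if $n=4$, and $d=5k$ if $n=5$. In particular $K[X_n]^{G_n}=\bigoplus_{k\ge0}K[X_n]^{G_n}_k$, where $K[X_n]^{G_n}_k$ is the space of invariants of weight $k$.
   Context: Let $K$ be a perfect field with algebraic closure $\overline K$. Genus one models and groups: (n=1) $\phi=(a_1,a_2,a_3,a_4,a_6)$, model $y^2+a_1xy+a_3y=x^3+a_2x^2+a_4x+a_6$; $\mathcal G_1$ consists of $[u;r,s,t]$, $u\ne0$, acting by substituting $x=u^2x'+r$, $y=u^3y'+u^2sx'+t$ and dividing by $u^6$; $\det[u;r,s,t]=u^{-1}$. (n=2) $\phi=(p,q)$, $p=\alpha_0x^2+\alpha_1xz+\alpha_2z^2$, $q=ax^4+bx^3z+cx^2z^2+dxz^3+ez^4$, model $y^2+p(x,z)y=q(x,z)$; $\mathcal G_2$ consists of $[\mu,r,B]$, acting by substituting $x=B_{11}x'+B_{21}z'$, $z=B_{12}x'+B_{22}z'$, $y=\mu^{-1}y'+r_0x'^2+r_1x'z'+r_2z'^2$ and multiplying by $\mu^2$; $\det=\mu\det B$. (n=3) ternary cubic $f$; $\mathcal G_3=\mathbb G_m\times\mathrm{GL}_3$, $[\mu,B]f=\mu f$ after substituting $x_j=\sum_iB_{ij}x_i'$; $\det=\mu\det B$. (n=4) pair of quadratic forms $\phi=(q_1,q_2)^T$ in 4 variables; $\mathcal G_4=\mathrm{GL}_2\times\mathrm{GL}_4$,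 $[A,B]$: $\phi\mapsto A\phi$ with $x_j=\sum_iB_{ij}x_i'$; $\det=\det A\det B$. (n=5) $5\times5$ alternating matrix $\phi$ of linear forms in 5 variables; $\mathcal G_5=\mathrm{GL}_5\times\mathrm{GL}_5$, $[A,B]$: $\phi\mapsto A\phi A^T$ with $x_j=\sum_iB_{ij}x_i'$; $\det=(\det A)^2\det B$. $G_n$ is the commutator subgroup: $G_1=\{[1;r,s,t]\}$, $G_2=\{[1,r,B]:B\in\mathrm{SL}_2\}$, $G_3=\mathrm{SL}_3$, $G_4=\mathrm{SL}_2\times\mathrm{SL}_4$, $G_5=\mathrm{SL}_5\times\mathrm{SL}_5$. $K[X_n]$ is the polynomial ring in the coefficients, graded by $\deg a_i=i$ ($n=1$), $\deg\alpha_i=1$, $\deg a=\dots=\deg e=2$ ($n=2$), and usual degree for $n=3,4,5$. $K[X_n]^{G_n}=\{F:F\circ g=F\ \forall g\in G_n(\overline K)\}$; $F$ is an invariant of weight $k$ if $F\circ g=(\det g)^kF$ for all $g\in\mathcal G_n(\overline K)$. *)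

(* Defs.v *)
From HB Require Import structures.
From mathcomp Require Import all_boot all_algebra.
From mathcomp Require Import mpoly.

Set Implicit Arguments.
Unset Strict Implicit.
Unset Printing Implicit Defensive.

Import GRing.Theory.
Local Open Scope ring_scope.

Definition wdeg (N : nat) (w : 'I_N -> nat) (m : 'X_{1..N}) : nat :=
  (\sum_(i < N) w i * m i)%N.

Lemma wdeg0 N (w : 'I_N -> nat) : wdeg w 0%MM = 0%N.
Proof. by rewrite /wdeg big1 // => i _; rewrite mnm0E muln0. Qed.

Lemma wdegD N (w : 'I_N -> nat) :
  {morph wdeg w : m1 m2 / (m1 + m2)%MM >-> (m1 + m2)%N}.
Proof.
by move=> m1 m2; rewrite /wdeg -big_split; apply: eq_bigr => i _;
  rewrite mnmDE mulnDr.
Qed.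

HB.instance Definition _ N (w : 'I_N -> nat) :=
  isMeasure.Build N (wdeg w) (wdeg0 w) (wdegD w).

Definition wmeasure N (w : 'I_N -> nat) : measure N := Measure.clone N (wdeg w) _.

Notation o i := (inord i).

Definition mnm (k : nat) (s : seq nat) : 'X_{1..k} :=
  [multinom nth 0%N s i | i < k].

Definition lsubst (R : nzRingType) (k : nat) (B : 'M[R]_k) :
    k.-tuple {mpoly R[k]} :=
  [tuple \sum_(i < k) (B i j)%:MP * 'X_i | j < k].

Definition perfect_field (K : fieldType) : Prop :=
  forall p : nat, p \in [pchar K] -> forall x : K, exists y : K, y ^+ p = x.

Definition algebraic_over (K L : fieldType) (iota : {rmorphism K -> L}) : Prop :=
  forall x : L, exists p : {poly K}, p != 0 /\ root (map_poly iota p) x.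

Section Models.
Variable L : fieldType.

(* coordinates (a1,a2,a3,a4,a6) = a 0, .., a 4 ; variables x = 'X_0, y = 'X_1 *)
Definition W1 (a : 'I_5 -> L) : {mpoly L[2]} :=
  let x : {mpoly L[2]} := 'X_(o 0) in let y : {mpoly L[2]} := 'X_(o 1) in
  y ^+ 2 + (a (o 0))%:MP * x * y + (a (o 2))%:MP * y
  - (x ^+ 3 + (a (o 1))%:MP * x ^+ 2 + (a (o 3))%:MP * x + (a (o 4))%:MP).

Record grp1 := G1 { g1u : L; g1r : L; g1s : L; g1t : L }.

Definition act1 (g : grp1) (a : 'I_5 -> L) : 'I_5 -> L :=
  let x : {mpoly L[2]} := 'X_(o 0) in let y : {mpoly L[2]} := 'X_(o 1) in
  let: G1 u r s t := g in
  let W' := (u ^- 6) *: (W1 a \mPo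
       [tuple (u ^+ 2)%:MP * x + r%:MP;
              (u ^+ 3)%:MP * y + (u ^+ 2 * s)%:MP * x + t%:MP]) in
  fun i => nth 0 [:: W'@_(mnm 2 [:: 1; 1]%N); - W'@_(mnm 2 [:: 2]%N);
                    W'@_(mnm 2 [:: 0; 1]%N); - W'@_(mnm 2 [:: 1]%N);
                    - W'@_(mnm 2 [::])] i.

Definition big1 (g : grp1) : bool := g1u g != 0.
Definition comm1 (g : grp1) : bool := g1u g == 1.
Definition det1 (g : grp1) : L := (g1u g)^-1.

(* coordinates (alpha0,alpha1,alpha2,a,b,c,d,e) = a 0, .., a 7 ;
   variables x = 'X_0, z = 'X_1, y = 'X_2 *)
Definition W2 (a : 'I_8 -> L) : {mpoly L[3]} :=
  let x : {mpoly L[3]} := 'X_(o 0) in let z : {mpoly L[3]} := 'X_(o 1) in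
  let y : {mpoly L[3]} := 'X_(o 2) in
  y ^+ 2 + ((a (o 0))%:MP * x ^+ 2 + (a (o 1))%:MP * x * z
            + (a (o 2))%:MP * z ^+ 2) * y
  - ((a (o 3))%:MP * x ^+ 4 + (a (o 4))%:MP * x ^+ 3 * z
     + (a (o 5))%:MP * x ^+ 2 * z ^+ 2 + (a (o 6))%:MP * x * z ^+ 3
     + (a (o 7))%:MP * z ^+ 4).

Record grp2 := G2 { g2mu : L; g2r0 : L; g2r1 : L; g2r2 : L; g2B : 'M[L]_2 }.

Definition act2 (g : grp2) (a : 'I_8 -> L) : 'I_8 -> L :=
  let x : {mpoly L[3]} := 'X_(o 0) in let z : {mpoly L[3]} := 'X_(o 1) in
  let y : {mpoly L[3]} := 'X_(o 2) in
  let: G2 mu r0 r1 r2 B := g in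
  let W' := (mu ^+ 2) *: (W2 a \mPo
       [tuple (B (o 0) (o 0))%:MP * x + (B (o 1) (o 0))%:MP * z;
              (B (o 0) (o 1))%:MP * x + (B (o 1) (o 1))%:MP * z;
              (mu^-1)%:MP * y + r0%:MP * x ^+ 2 + r1%:MP * x * z
                + r2%:MP * z ^+ 2]) in
  fun i => nth 0 [:: W'@_(mnm 3 [:: 2; 0; 1]%N); W'@_(mnm 3 [:: 1; 1; 1]%N);
                    W'@_(mnm 3 [:: 0; 2; 1]%N); - W'@_(mnm 3 [:: 4; 0; 0]%N);
                    - W'@_(mnm 3 [:: 3; 1; 0]%N); - W'@_(mnm 3 [:: 2; 2; 0]%N);
                    - W'@_(mnm 3 [:: 1; 3; 0]%N); - W'@_(mnm 3 [:: 0; 4; 0]%N)] i.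

Definition big2 (g : grp2) : bool := (g2mu g != 0) && (g2B g \in unitmx).
Definition comm2 (g : grp2) : bool := (g2mu g == 1) && (\det (g2B g) == 1).
Definition det2 (g : grp2) : L := g2mu g * \det (g2B g).

Definition mons3 : seq (seq nat) :=
  [:: [:: 3; 0; 0]; [:: 0; 3; 0]; [:: 0; 0; 3]; [:: 2; 1; 0]; [:: 2; 0; 1];
      [:: 1; 2; 0]; [:: 0; 2; 1]; [:: 1; 0; 2]; [:: 0; 1; 2]; [:: 1; 1; 1]]%N.

Definition cubic (a : 'I_10 -> L) : {mpoly L[3]} :=
  \sum_(i < 10) (a i)%:MP * 'X_[mnm 3 (nth [::] mons3 i)].

Record grp3 := G3 { g3mu : L; g3B : 'M[L]_3 }.

Definition act3 (g : grp3) (a : 'I_10 -> L) : 'I_10 -> L :=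
  let f' := g3mu g *: (cubic a \mPo lsubst (g3B g)) in
  fun i => f'@_(mnm 3 (nth [::] mons3 i)).

Definition big3 (g : grp3) : bool := (g3mu g != 0) && (g3B g \in unitmx).
Definition comm3 (g : grp3) : bool := (g3mu g == 1) && (\det (g3B g) == 1).
Definition det3 (g : grp3) : L := g3mu g * \det (g3B g).

(* the 10 quadratic monomials in 4 variables;
   coordinate 10*l + m is the coefficient of monomial m in q_(l+1) *)
Definition mons4 : seq (seq nat) :=
  [:: [:: 2; 0; 0; 0]; [:: 0; 2; 0; 0]; [:: 0; 0; 2; 0]; [:: 0; 0; 0; 2];
      [:: 1; 1; 0; 0]; [:: 1; 0; 1; 0]; [:: 1; 0; 0; 1]; [:: 0; 1; 1; 0];
      [:: 0; 1; 0; 1]; [:: 0; 0; 1; 1]]%N.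

Definition qform (a : 'I_20 -> L) (l : nat) : {mpoly L[4]} :=
  \sum_(m < 10) (a (inord (10 * l + m)))%:MP * 'X_[mnm 4 (nth [::] mons4 m)].

Record grp4 := G4 { g4A : 'M[L]_2; g4B : 'M[L]_4 }.

Definition act4 (g : grp4) (a : 'I_20 -> L) : 'I_20 -> L :=
  fun c =>
    (\sum_(j < 2) (g4A g (inord (c %/ 10)) j)%:MP * (qform a j \mPo lsubst (g4B g)))
      @_(mnm 4 (nth [::] mons4 (c %% 10))).

Definition big4 (g : grp4) : bool := (g4A g \in unitmx) && (g4B g \in unitmx).
Definition comm4 (g : grp4) : bool := (\det (g4A g) == 1) && (\det (g4B g) == 1).
Definition det4 (g : grp4) : L := \det (g4A g) * \det (g4B g).

(* the 10 positions (i,j), i < j, of a 5x5 alternating matrix;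
   coordinate 5*p + k is the coefficient of x_k in the entry at position p *)
Definition pairs5 : seq (nat * nat) :=
  [:: (0,1); (0,2); (0,3); (0,4); (1,2); (1,3); (1,4); (2,3); (2,4); (3,4)]%N.

Definition linf (a : 'I_50 -> L) (p : nat) : {mpoly L[5]} :=
  \sum_(k < 5) (a (inord (5 * p + k)))%:MP * 'X_k.

Definition altmx (a : 'I_50 -> L) : 'M[{mpoly L[5]}]_5 :=
  \matrix_(i < 5, j < 5)
    if (i < j)%N then linf a (index (val i, val j) pairs5)
    else if (j < i)%N then - linf a (index (val j, val i) pairs5)
    else 0.

Record grp5 := G5 { g5A : 'M[L]_5; g5B : 'M[L]_5 }.

Definition act5 (g : grp5) (a : 'I_50 -> L) : 'I_50 -> L :=
  fun c =>
    let A : 'M[{mpoly L[5]}]_5 := map_mx (fun e => e%:MP) (g5A g) in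
    let M := A *m map_mx (comp_mpoly (lsubst (g5B g))) (altmx a) *m A^T in
    let pr := nth (0, 0)%N pairs5 (c %/ 5) in
    (M (inord pr.1) (inord pr.2))@_(U_(inord (c %% 5)))%MM.

Definition big5 (g : grp5) : bool := (g5A g \in unitmx) && (g5B g \in unitmx).
Definition comm5 (g : grp5) : bool := (\det (g5A g) == 1) && (\det (g5B g) == 1).
Definition det5 (g : grp5) : L := \det (g5A g) ^+ 2 * \det (g5B g).

(* The data attached to n: number N of coefficients, weights of the
   coefficients, parameter type for group elements, membership in
   calG_n(L) and in G_n(L), the determinant, the action on X_n(L) = L^N,
   and the ratio r with d = r k. *)
Record gsetting := GSetting {
  gs_N : nat;
  gs_w : 'I_gs_N -> nat;
  gs_grp : Type;
  gs_big : gs_grp -> bool;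
  gs_comm : gs_grp -> bool;
  gs_det : gs_grp -> L;
  gs_act : gs_grp -> ('I_gs_N -> L) -> ('I_gs_N -> L);
  gs_r : nat }.

Definition weights1 (i : 'I_5) : nat := nth 0%N [:: 1; 2; 3; 4; 6]%N i.
Definition weights2 (i : 'I_8) : nat := nth 0%N [:: 1; 1; 1; 2; 2; 2; 2; 2]%N i.

Definition setting (n : nat) : gsetting :=
  match n with
  | 1 => @GSetting 5 weights1 grp1 big1 (fun g => big1 g && comm1 g) det1 act1 1
  | 2 => @GSetting 8 weights2 grp2 big2 (fun g => big2 g && comm2 g) det2 act2 1
  | 3 => @GSetting 10 (fun _ => 1%N) grp3 big3 (fun g => big3 g && comm3 g) det3 act3 1
  | 4 => @GSetting 20 (fun _ => 1%N) grp4 big4 (fun g => big4 g && comm4 g) det4 act4 2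
  | _ => @GSetting 50 (fun _ => 1%N) grp5 big5 (fun g => big5 g && comm5 g) det5 act5 5
  end.

End Models.

(* Invariants.  F : {mpoly K[N]} is a polynomial in the coefficients;
   F o g is evaluated on X_n(Kbar) = Kbar^N. *)
Section Invariants.
Variables (K : fieldType) (L : fieldType) (iota : {rmorphism K -> L}).
Variable S : gsetting L.

Definition is_Ginv (F : {mpoly K[gs_N S]}) : Prop :=
  forall g : gs_grp S, gs_comm g -> forall a : 'I_(gs_N S) -> L,
    (map_mpoly iota F).@[gs_act g a] = (map_mpoly iota F).@[a].

Definition is_weight_inv (k : nat) (F : {mpoly K[gs_N S]}) : Prop :=
  forall g : gs_grp S, gs_big g -> forall a : 'I_(gs_N S) -> L,
    (map_mpoly iota F).@[gs_act g a] = gs_det g ^+ k * (map_mpoly iota F).@[a].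

End Invariants.

Arguments is_Ginv {K L} iota S F.
Arguments is_weight_inv {K L} iota S k F.
Arguments gs_w {L} g _.

(* Main.v *)
Require Import Defs.
From HB Require Import structures.
From mathcomp Require Import all_boot all_algebra.
From mathcomp Require Import mpoly.
From mathcomp Require Import ring.
Set Implicit Arguments.
Unset Strict Implicit.
Unset Printing Implicit Defensive.
Import GRing.Theory.
Local Open Scope ring_scope.

Section Closed.
Variable L : closedFieldType.

Lemma poly_nz_pt (p : {poly L}) : p != 0 -> exists x, x != 0 /\ p.[x] != 0.
Proof.
move=> pn0; set q := p * 'X + 1.
have sq : size q = (size p).+1.
  rewrite /q size_polyDl ?size_mulX // size_poly1 ltnS lt0n size_poly_eq0 //.
have : size q != 1%N by rewrite sq eqSS size_poly_eq0.
case/closed_rootP=> x; rewrite /root /q !hornerE => /eqP h.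
have h2 : p.[x] * x = -1 by apply/eqP; rewrite -subr_eq0 opprK h.
exists x; split; apply/eqP=> e; move: h2; rewrite e ?mulr0 ?mul0r => /eqP;
  by rewrite eq_sym oppr_eq0 oner_eq0.
Qed.

Lemma poly_vanish (p : {poly L}) : (forall x, x != 0 -> p.[x] = 0) -> p = 0.
Proof.
move=> h; apply/eqP; apply/negPn/negP=> /poly_nz_pt [x [xn0]]; by rewrite h ?eqxx.
Qed.

Lemma closed_root_r (r : nat) (x : L) : (0 < r)%N -> exists y, y ^+ r = x.
Proof.
move=> r0; have : size ('X^r - x%:P : {poly L}) != 1%N.
  rewrite size_polyDl ?size_polyXn ?size_opp ?size_polyC; first by rewrite eqSS -lt0n.
  by case: (x != 0) => //; rewrite ltnS.
case/closed_rootP=> y; rewrite /root !hornerE subr_eq0 => /eqP h; by exists y.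
Qed.

End Closed.

Notation widen := (widen_ord (leqnSn _)).
Section Vanish.
Variable L : closedFieldType.

Definition minit N (m : 'X_{1..N.+1}) : 'X_{1..N} := [multinom m (widen i) | i < N].

Definition ext N (a : 'I_N -> L) (x : L) : 'I_N.+1 -> L :=
  fun i => if unlift ord_max i is Some j then a j else x.

Lemma ext_widen N a x (i : 'I_N) : ext a x (widen i) = a i.
Proof.
rewrite /ext; case: unliftP => [j /eqP|/eqP].
  by rewrite eqE /= /bump leqNgt ltn_ord add0n => /eqP/val_inj ->.
by rewrite -val_eqE /= ltn_eqF.
Qed.

Lemma ext_max N a x : ext (N := N) a x ord_max = x.
Proof. by rewrite /ext unlift_none. Qed.

Lemma mle_mdeg N (m : 'X_{1..N}) i : (m i <= mdeg m)%N.
Proof. by rewrite mdegE (bigD1 i) //= leq_addr. Qed.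

Lemma minit_inj N (m1 m2 : 'X_{1..N.+1}) :
  minit m1 = minit m2 -> m1 ord_max = m2 ord_max -> m1 = m2.
Proof.
move=> h1 h2; apply/mnmP=> i; case: (unliftP ord_max i) => [j ->|-> //].
have : minit m1 j = minit m2 j by rewrite h1.
rewrite !mnmE; congr (fun i => m1 i = m2 i); apply/val_inj => /=.
by rewrite /bump leqNgt ltn_ord.
Qed.

Lemma mpoly_vanish N (p : {mpoly L[N]}) : (forall a, p.@[a] = 0) -> p = 0.
Proof.
elim: N p => [|N IH] p h.
  by rewrite [p]nvar0_mpolyC; move: (h (fun _ => 0)); rewrite {1}[p]nvar0_mpolyC mevalC => ->.
set B := msize p.
pose Pj (j : nat) : {mpoly L[N]} :=
  \sum_(m <- msupp p | m ord_max == j) p@_m *: 'X_[minit m].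
have evalE a x : p.@[ext a x] = \sum_(j < B) (Pj j).@[a] * x ^+ j.
  rewrite mevalE; apply/esym.
  under eq_bigr => j _ do rewrite /Pj raddf_sum /= mulr_suml big_mkcond /=.
  rewrite exchange_big /=; apply: eq_big_seq => m mp; apply/esym.
  have lt : (m ord_max < B)%N by exact: leq_ltn_trans (mle_mdeg m ord_max) (msize_mdeg_lt mp).
  rewrite [RHS](bigD1 (Ordinal lt)) //= eqxx [X in _ + X]big1 ?addr0; last first.
    move=> j ne; rewrite ifN //; apply: contra ne => /eqP e; apply/eqP/val_inj; rewrite /= e //.
  rewrite -mul_mpolyC mevalM mevalC mevalX big_ord_recr /= ext_max -mulrA; congr (_ * (_ * _)).
  by apply: eq_bigr => i _; rewrite mnmE ext_widen.
have Pj0 j : (j < B)%N -> Pj j = 0.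
  move=> ltj; apply: IH => a.
  pose Q := \poly_(j < B) (Pj j).@[a].
  have QE : Q = 0.
    by apply: poly_vanish => x _; rewrite horner_poly -evalE h.
  have := congr1 (fun q : {poly L} => q`_j) QE.
  by rewrite /= coef_poly ltj coef0.
apply/mpolyP => m; rewrite mcoeff0.
case: (boolP (m \in msupp p)) => [mp|/memN_msupp_eq0 //].
have lt : (m ord_max < B)%N by exact: leq_ltn_trans (mle_mdeg m ord_max) (msize_mdeg_lt mp).
move: (congr1 (mcoeff (minit m)) (Pj0 _ lt)); rewrite mcoeff0 /Pj raddf_sum /=.
rewrite -big_filter (bigD1_seq m) ?filter_uniq ?msupp_uniq ?mem_filter ?eqxx ?mp //=.
rewrite mcoeffZ mcoeffX eqxx mulr1 big1_seq ?addr0 //.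
move=> m' /andP[ne]; rewrite mem_filter => /andP[/eqP e _]; rewrite mcoeffZ mcoeffX.
case: eqP => [/minit_inj/(_ e) /eqP|]; first by rewrite (negbTE ne).
by rewrite mulr0.
Qed.

End Vanish.

Section Gen.
Variable L : closedFieldType.

Lemma meval_scale N (e : 'I_N -> nat) (c : L) (a : 'I_N -> L) (m : 'X_{1..N}) :
  \prod_i (c ^+ e i * a i) ^+ m i = c ^+ (\sum_i e i * m i)%N * \prod_i a i ^+ m i.
Proof.
rewrite -prodrXr -big_split /=; apply: eq_bigr => i _.
by rewrite exprMn -exprM.
Qed.

Lemma meval_homog N (w : 'I_N -> nat) d (p : {mpoly L[N]}) (c : L) a :
  p \is d.-homog for (wmeasure w) -> p.@[fun i => c ^+ w i * a i] = c ^+ d * p.@[a].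
Proof.
move/dhomogP => hp; rewrite !mevalE mulr_sumr; apply: eq_big_seq => m mp.
rewrite meval_scale mulrCA; congr (_ ^+ _ * _).
exact: (hp m mp).
Qed.

Lemma map_homog (K : fieldType) (iota : {rmorphism K -> L}) N (w : 'I_N -> nat) d
  (F : {mpoly K[N]}) :
  F \is d.-homog for (wmeasure w) -> map_mpoly iota F \is d.-homog for (wmeasure w).
Proof.
move/dhomogP => hp; apply/dhomogP => m.
rewrite (perm_mem (msupp_map_mpoly _ (@fmorph_inj _ _ iota))); exact: hp.
Qed.

Lemma map_mpoly_eq0 (K : fieldType) (iota : {rmorphism K -> L}) N (F : {mpoly K[N]}) :
  map_mpoly iota F = 0 -> F = 0.
Proof.
move=> h; apply/mpolyP => m; have := congr1 (mcoeff m) h.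
rewrite mcoeff_map_mpoly !mcoeff0 => /eqP; rewrite fmorph_eq0 => /eqP //.
Qed.

Lemma eval_poly N (e : 'I_N -> nat) (b : 'I_N -> L) (p : {mpoly L[N]}) :
  exists Q : {poly L}, forall t, p.@[fun i => t ^+ e i * b i] = Q.[t].
Proof.
exists (\sum_(m <- msupp p) (p@_m * \prod_i b i ^+ m i) *: 'X^(\sum_i e i * m i)%N).
move=> t; rewrite mevalE horner_sum; apply: eq_bigr => m _.
by rewrite hornerZ hornerXn meval_scale mulrCA [LHS]mulrC.
Qed.

Lemma div_root (Q : {poly L}) (r D : nat) (c : L) :
  (0 < r)%N -> ~~ (r %| D)%N -> (forall s, s != 0 -> Q.[s ^+ r] = s ^+ D * c) -> c = 0.
Proof.
move=> r0 nd h.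
have P0 : Q \Po 'X^r - c *: 'X^D = 0.
  by apply: poly_vanish => s s0; rewrite !hornerE horner_comp hornerXn h // mulrC subrr.
have := congr1 (fun q : {poly L} => q`_D) P0.
by rewrite /= coefB coef_comp_poly_Xn // (negbTE nd) coefZ coefXn eqxx mulr1 coef0 sub0r => /eqP; rewrite oppr_eq0 => /eqP.
Qed.

Lemma sum_pow0 (M : nat) (c : nat -> L) :
  (forall t, t != 0 -> \sum_(k < M) c k * t ^+ k = 0) -> forall k, (k < M)%N -> c k = 0.
Proof.
move=> h k kM.
have P0 : \poly_(k < M) c k = 0 by apply: poly_vanish => t t0; rewrite horner_poly h.
have := congr1 (fun q : {poly L} => q`_k) P0.
by rewrite /= coef_poly kM coef0.
Qed.

End Gen.

Section Comp.
Variable R : comRingType.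

Lemma comp_mpolyA n k l (p : {mpoly R[n]}) (t1 : n.-tuple {mpoly R[k]})
    (t2 : k.-tuple {mpoly R[l]}) :
  (p \mPo t1) \mPo t2 = p \mPo [tuple (tnth t1 i) \mPo t2 | i < n].
Proof.
rewrite [p \mPo t1]comp_mpolyEX [RHS]comp_mpolyEX.
rewrite (big_morph _ (comp_mpolyD t2) (comp_mpoly0 t2)).
apply: eq_bigr => m _.
rewrite comp_mpolyZ [_ \mPo t1]comp_mpolyX [in RHS]comp_mpolyX rmorph_prod; congr (_ *: _); apply: eq_bigr => i _.
by rewrite rmorphXn tnth_map tnth_ord_tuple.
Qed.

Definition dtuple n (c : 'I_n -> R) : n.-tuple {mpoly R[n]} :=
  [tuple (c i)%:MP * 'X_i | i < n].

Lemma comp_dtupleX n (c : 'I_n -> R) m :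
  'X_[m] \mPo dtuple c = (\prod_i c i ^+ m i)%:MP * 'X_[m].
Proof.
rewrite comp_mpolyX mpolyXE_id rmorph_prod -big_split /=; apply: eq_bigr => i _.
by rewrite tnth_mktuple exprMn rmorphXn.
Qed.

Lemma comp_diag_coef n (V : {mpoly R[n]}) (c : 'I_n -> R) m :
  (V \mPo dtuple c)@_m = (\prod_i c i ^+ m i) * V@_m.
Proof.
rewrite comp_mpolyEX raddf_sum /=.
under eq_bigr => m' _ do rewrite mcoeffZ comp_dtupleX mcoeffCM mcoeffX.
case: (boolP (m \in msupp V)) => mV.
  rewrite (bigD1_seq _ mV (msupp_uniq V)) /= eqxx mulr1 [X in _ + X]big1 ?addr0; first by rewrite mulrC.
  by move=> m' /negbTE ->; rewrite !mulr0.
rewrite big1_seq ?(memN_msupp_eq0 mV) ?mulr0 // => m' m'V.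
have -> : (m' == m) = false by apply: contraNF mV => /eqP <-.
by rewrite !mulr0.
Qed.

Lemma prod_const_mdeg n (c : R) (m : 'X_{1..n}) : \prod_i c ^+ m i = c ^+ mdeg m.
Proof. by rewrite prodrXr mdegE. Qed.

Lemma mdeg_mnm k s : mdeg (mnm k s) = (\sum_(i < k) nth 0 s i)%N.
Proof. by rewrite mdegE; apply: eq_bigr => i _; rewrite mnmE. Qed.

End Comp.

Section Lsubst.
Variable R : comRingType.
Lemma lsubst_scale k (lam : R) (B0 : 'M[R]_k) :
  lsubst (lam *: B0) = [tuple (tnth (lsubst B0) j) \mPo dtuple (fun _ => lam) | j < k].
Proof.
apply: eq_from_tnth => j; rewrite !tnth_mktuple.
rewrite (big_morph _ (comp_mpolyD _) (comp_mpoly0 _)); apply: eq_bigr => i _.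
rewrite rmorphM /= comp_mpolyC comp_mpolyXU -tnth_nth tnth_mktuple mxE mpolyCM.
by rewrite mulrCA mulrA.
Qed.
End Lsubst.

Lemma compCM (R : comRingType) n k (c : R) (Q : {mpoly R[n]}) (t : n.-tuple {mpoly R[k]}) :
  (c%:MP * Q) \mPo t = c%:MP * (Q \mPo t).
Proof. by rewrite rmorphM /= comp_mpolyC. Qed.

Section Abstract.
Variables (K : fieldType) (L : closedFieldType) (iota : {rmorphism K -> L}).
Variable S : gsetting L.
Local Notation N := (gs_N S).
Local Notation w := (gs_w S).
Local Notation r := (gs_r S).
Local Notation act := (@gs_act _ S).

Definition HcommP := forall g : gs_grp S, gs_comm g -> gs_big g /\ gs_det g = 1.
Definition HdetP := forall t : L, t != 0 -> exists g : gs_grp S, gs_big g /\ gs_det g = t.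
Definition HdecP := forall g : gs_grp S, gs_big g -> exists (c : L) (h : gs_grp S), gs_comm h /\ c ^+ r = gs_det g /\
  forall a i, act g a i = c ^+ w i * act h a i.
Definition HdivP := r = 1%N \/ ((forall i, w i = 1%N) /\ exists rho, coprime rho r /\
  forall a, exists (e : 'I_N -> nat) (b : 'I_N -> L), forall s : L, s != 0 ->
    exists h : gs_grp S, gs_comm h /\ forall i, s ^+ rho * act h a i = (s ^+ r) ^+ e i * b i).
Definition HconjP := forall h : gs_grp S, gs_comm h -> forall c : L, c != 0 -> exists h' : gs_grp S, gs_comm h' /\
  forall a i, act h' (fun i => c ^+ w i * a i) i = c ^+ w i * act h a i.

Hypothesis Hcomm : HcommP.
Hypothesis Hdet : HdetP.
Hypothesis Hr : (0 < r)%N.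
Hypothesis Hdec : HdecP.
Hypothesis Hdiv : HdivP.
Hypothesis Hconj : HconjP.

Lemma part1 (d : nat) (F : {mpoly K[N]}) :
  F \is d.-homog for (wmeasure w) -> is_Ginv iota S F -> F != 0 ->
  exists k : nat, d = (r * k)%N /\ is_weight_inv iota S k F.
Proof.
move=> hom inv Fn0; have hom' := map_homog iota hom.
have rd : (r %| d)%N.
  case: Hdiv => [-> //|[w1 [rho [cop H]]]].
  apply/negPn/negP => nd; move/negP: Fn0; apply; apply/eqP.
  apply: (map_mpoly_eq0 (iota := iota)); apply: mpoly_vanish => a.
  have [e [b Hb]] := H a.
  have [Q HQ] := eval_poly e b (map_mpoly iota F).
  apply: (div_root (Q := Q) Hr (D := (rho * d)%N)).
    by rewrite Gauss_dvdr; last by rewrite coprime_sym.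
  move=> s s0; have [h [hc Hh]] := Hb s s0.
  rewrite -HQ -(meval_eq _ (fun i => Hh i)).
  rewrite (@meval_eq _ _ _ (fun i => (s ^+ rho) ^+ w i * act h a i)); last first.
    by move=> i /=; rewrite w1 expr1.
  by rewrite (meval_homog _ _ hom') inv // exprM.
exists (d %/ r)%N; split; first by rewrite mulnC divnK.
move=> g gb a; have [c [h [hc [cr Hg]]]] := Hdec gb.
rewrite (meval_eq _ (Hg a)) (meval_homog _ _ hom') inv // -cr -exprM mulnC divnK //.
Qed.

Lemma part2 (k : nat) (F : {mpoly K[N]}) :
  is_weight_inv iota S k F -> is_Ginv iota S F.
Proof.
move=> H g gc a; have [gb gd] := Hcomm gc.
by rewrite H // gd expr1n mul1r.
Qed.

Lemma map_sum_eval (I : Type) (s : seq I) (P : pred I) (Fk : I -> {mpoly K[N]}) a :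
  (map_mpoly iota (\sum_(k <- s | P k) Fk k)).@[a] = \sum_(k <- s | P k) (map_mpoly iota (Fk k)).@[a].
Proof. by rewrite (raddf_sum (map_mpoly iota)) raddf_sum. Qed.

Lemma part4 (M : nat) (Fk : nat -> {mpoly K[N]}) :
  (forall k, is_weight_inv iota S k (Fk k)) ->
  \sum_(k < M) Fk k = 0 -> forall k, (k < M)%N -> Fk k = 0.
Proof.
move=> H s0 k kM; apply: (map_mpoly_eq0 (iota := iota)); apply: mpoly_vanish => a.
apply: (sum_pow0 (M := M) (c := fun k => (map_mpoly iota (Fk k)).@[a])) => // t t0.
have [g [gb gd]] := Hdet t0.
have := map_sum_eval (index_enum 'I_M) xpredT (fun k : 'I_M => Fk k) (act g a).
rewrite s0 raddf0 meval0 => /esym E; rewrite -[RHS]E.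
by apply: eq_bigr => i _; rewrite H // gd mulrC.
Qed.

Lemma part3 (F : {mpoly K[N]}) : is_Ginv iota S F ->
  exists (M : nat) (Fk : nat -> {mpoly K[N]}),
    (forall k, is_weight_inv iota S k (Fk k)) /\ F = \sum_(k < M) Fk k.
Proof.
move=> inv.
set mf := wmeasure w; set Dm := mmeasure mf F.
have dec : F = \sum_(d < Dm) pihomog mf d F := pihomog_partitionE (leqnn _).
have comp_inv d : (d < Dm)%N -> is_Ginv iota S (pihomog mf d F).
  move=> dlt h hc a.
  pose f := fun d => (map_mpoly iota (pihomog mf d F)).@[act h a]
                     - (map_mpoly iota (pihomog mf d F)).@[a].
  suff : forall d, (d < Dm)%N -> f d = 0 by move/(_ d dlt)/eqP; rewrite subr_eq0 => /eqP.
  apply: sum_pow0 => c c0.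
  have [h' [hc' Hh']] := Hconj hc c0.
  have key x : (map_mpoly iota F).@[fun i => c ^+ w i * x i] =
      \sum_(d < Dm) (map_mpoly iota (pihomog mf d F)).@[x] * c ^+ d.
    rewrite {1}dec map_sum_eval; apply: eq_bigr => i _.
    by rewrite (meval_homog _ _ (map_homog iota (pihomogP _ _ F))) mulrC.
  rewrite /f; under eq_bigr => i _ do rewrite mulrBl.
  by rewrite sumrB -!key -(meval_eq _ (Hh' _)) !inv // subrr.
pose Fk k := if (r * k < Dm)%N then pihomog mf (r * k) F else 0.
have zero_w k : is_weight_inv iota S k 0.
  by move=> g _ a; rewrite (raddf0 (map_mpoly iota)) !meval0 mulr0.
have wk k : is_weight_inv iota S k (Fk k).
  rewrite /Fk; case: ifP => lt //.
  have [->|nz] := eqVneq (pihomog mf (r * k) F) 0; first exact: zero_w.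
  have [k' [e wk']] := part1 (pihomogP _ _ F) (comp_inv _ lt) nz.
  by move/eqP: e; rewrite eqn_pmul2l // => /eqP e; subst k'.
have z d : (d < Dm)%N -> ~~ (r %| d)%N -> pihomog mf d F = 0.
  move=> dlt nd; apply/eqP/negPn/negP => nz.
  have [k' [e _]] := part1 (pihomogP _ _ F) (comp_inv _ dlt) nz.
  by move/negP: nd; apply; rewrite e dvdn_mulr.
exists Dm, Fk; split => //.
have E k : Fk k = \sum_(d < Dm) (if nat_of_ord d == (r * k)%N then pihomog mf d F else 0).
  rewrite -big_mkcond /= /Fk; case: ifP => lt.
    rewrite (big_pred1 (Ordinal lt)) //= => d; rewrite -val_eqE //.
  by rewrite big_pred0 // => d; apply/negbTE; apply: contraFN lt => /eqP <-.
rewrite {1}dec; under [RHS]eq_bigr => k _ do rewrite E.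
rewrite exchange_big /=; apply: eq_bigr => d _.
rewrite -big_mkcond /=.
case: (boolP (r %| d)%N) => rd.
  have lt : (d %/ r < Dm)%N by apply: leq_ltn_trans (leq_div _ _) (ltn_ord d).
  rewrite (big_pred1 (Ordinal lt)) // => k; rewrite /pred1 /= -val_eqE /=.
  apply/eqP/eqP => [e|e]; first by rewrite e mulKn.
  by rewrite e mulnC divnK.
rewrite z // big_pred0 // => k; apply/negbTE; apply: contra rd => /eqP ->.
by rewrite dvdn_mulr.
Qed.

Lemma all_parts :
  (forall (d : nat) (F : {mpoly K[gs_N S]}),
      F \is d.-homog for (wmeasure (gs_w S)) -> is_Ginv iota S F -> F != 0 ->
      exists k : nat, d = (gs_r S * k)%N /\ is_weight_inv iota S k F)
  /\ (forall (k : nat) (F : {mpoly K[gs_N S]}),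
        is_weight_inv iota S k F -> is_Ginv iota S F)
  /\ (forall F : {mpoly K[gs_N S]}, is_Ginv iota S F ->
        exists (M : nat) (Fk : nat -> {mpoly K[gs_N S]}),
          (forall k, is_weight_inv iota S k (Fk k)) /\
          F = \sum_(k < M) Fk k)
  /\ (forall (M : nat) (Fk : nat -> {mpoly K[gs_N S]}),
        (forall k, is_weight_inv iota S k (Fk k)) ->
        \sum_(k < M) Fk k = 0 -> forall k, (k < M)%N -> Fk k = 0).
Proof.
split; first exact: part1.
split; first exact: part2.
split; first exact: part3.
exact: part4.
Qed.

End Abstract.

Section N3.
Variable L : closedFieldType.

Lemma mdeg3 (i : 'I_10) : mdeg (mnm 3 (nth [::] mons3 i)) = 3%N.
Proof.
rewrite mdeg_mnm !big_ord_recr big_ord0 /=; apply/eqP.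
have /allP : all (fun s => nth 0 s 0 + nth 0 s 1 + nth 0 s 2 == 3)%N mons3 by [].
by apply; rewrite mem_nth.
Qed.

Lemma act3_scale (mu lam : L) (B0 : 'M[L]_3) a i :
  act3 (G3 mu (lam *: B0)) a i = (mu * lam ^+ 3) * act3 (G3 1 B0) a i.
Proof.
rewrite /act3 /= lsubst_scale -comp_mpolyA !mcoeffZ comp_diag_coef prod_const_mdeg mdeg3.
by rewrite mul1r mulrA.
Qed.

Lemma cubic_scale (c : L) a : cubic (fun i => c * a i) = c *: cubic a.
Proof.
rewrite /cubic scaler_sumr; apply: eq_bigr => i _.
by rewrite mpolyCM -mulrA mul_mpolyC.
Qed.

Lemma act3_lin (g : grp3 L) (c : L) a i :
  act3 g (fun i => c * a i) i = c * act3 g a i.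
Proof.
by rewrite /act3 cubic_scale comp_mpolyZ scalerA mulrC -scalerA mcoeffZ.
Qed.

End N3.

Section H3.
Variable L : closedFieldType.
Local Notation S := (setting L 3).

Lemma Hcomm3 : HcommP S.
Proof.
move=> [mu B] /=; rewrite /big3 /comm3 /det3 /= => /andP[-> /andP[/eqP -> /eqP ->]].
by rewrite mulr1.
Qed.

Lemma Hdet3 : HdetP S.
Proof.
move=> t t0; exists (G3 t 1); by rewrite /= /big3 /det3 /= unitmx1 det1 mulr1 t0.
Qed.

Lemma Hdec3 : HdecP S.
Proof.
move=> [mu B]; rewrite /big3 /= => /andP[mu0 Bu].
have dB : \det B != 0 by rewrite -unitfE -unitmxE.
have [lam hl] := closed_root_r (\det B) (isT : (0 < 3)%N).
have l0 : lam != 0 by apply: contraNneq dB => e; rewrite -hl e expr0n.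
pose B0 := lam^-1 *: B.
have BB : B = lam *: B0 by rewrite /B0 scalerA divff // scale1r.
have dB0 : \det B0 = 1 by rewrite /B0 detZ exprVn hl mulVf.
exists (mu * lam ^+ 3), (G3 1 B0); split.
  by rewrite /= /big3 /comm3 /= oner_neq0 unitmxE dB0 unitr1 eqxx.
split; first by rewrite /det3 /= expr1 hl.
move=> a i /=; rewrite expr1 {1}BB; exact: act3_scale.
Qed.

Lemma Hdiv3 : HdivP S.
Proof. by left. Qed.

Lemma Hconj3 : HconjP S.
Proof.
move=> h hc c c0; exists h; split => // a i /=.
exact: act3_lin.
Qed.

End H3.

Section N4.
Variable L : closedFieldType.

Lemma mdeg4 (i : nat) : (i < 10)%N -> mdeg (mnm 4 (nth [::] mons4 i)) = 2%N.
Proof.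
move=> lt; rewrite mdeg_mnm !big_ord_recr big_ord0 /=; apply/eqP.
have /allP : all (fun s => nth 0 s 0 + nth 0 s 1 + nth 0 s 2 + nth 0 s 3 == 2)%N mons4 by [].
by apply; rewrite mem_nth.
Qed.

Lemma act4_scale (al be : L) (A0 : 'M[L]_2) (B0 : 'M[L]_4) a c :
  act4 (G4 (al *: A0) (be *: B0)) a c = (al * be ^+ 2) * act4 (G4 A0 B0) a c.
Proof.
rewrite /act4 /= lsubst_scale.
under eq_bigr => j _ do rewrite -comp_mpolyA mxE mpolyCM -mulrA -compCM.
rewrite -mulr_sumr -(big_morph _ (comp_mpolyD _) (comp_mpoly0 _)) mcoeffCM comp_diag_coef.
by rewrite prod_const_mdeg mdeg4 ?ltn_mod // mulrA.
Qed.

Lemma qform_scale (c : L) a l : qform (fun i => c * a i) l = c *: qform a l.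
Proof.
rewrite /qform scaler_sumr; apply: eq_bigr => i _.
by rewrite mpolyCM -mulrA mul_mpolyC.
Qed.

Lemma act4_lin (g : grp4 L) (c : L) a i :
  act4 g (fun i => c * a i) i = c * act4 g a i.
Proof.
rewrite /act4 -mcoeffZ scaler_sumr; congr mcoeff; apply: eq_bigr => j _.
by rewrite qform_scale comp_mpolyZ scalerAr.
Qed.

Lemma sum_diag (R : comRingType) k (A : 'M[R]_2) l (Q : 'I_2 -> {mpoly R[k]}) :
  (forall i j, i != j -> A i j = 0) ->
  \sum_(j < 2) (A l j)%:MP * Q j = (A l l)%:MP * Q l.
Proof.
move=> dA; rewrite (bigD1 l) //= big1 ?addr0 // => j jl.
by rewrite dA 1?eq_sym // mpolyC0 mul0r.
Qed.

Lemma act4_diag (A : 'M[L]_2) B a c :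
  (forall i j, i != j -> A i j = 0) ->
  act4 (G4 A B) a c = A (inord (c %/ 10)) (inord (c %/ 10)) * act4 (G4 1 B) a c.
Proof.
move=> dA; rewrite /act4 /= !sum_diag //; last first.
  by move=> i j ij; rewrite mxE (negbTE ij).
by rewrite mxE eqxx mul1r mcoeffCM.
Qed.

End N4.

Section H4.
Variable L : closedFieldType.
Local Notation S := (setting L 4).

Definition dg2 (x y : L) : 'M[L]_2 := diag_mx (\row_(i < 2) (if i == ord0 then x else y)).

Lemma det_dg2 x y : \det (dg2 x y) = x * y.
Proof. by rewrite det_diag !big_ord_recr big_ord0 /= !mxE /= mul1r. Qed.

Lemma dg2_diag (s x y : L) i j : i != j -> (s *: dg2 x y) i j = 0.
Proof. by move=> ij; rewrite !mxE (negbTE ij) mulr0n mulr0. Qed.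

Lemma dg2E (s x y : L) i : (s *: dg2 x y) i i = s * (if i == ord0 then x else y).
Proof. by rewrite !mxE eqxx mulr1n. Qed.

Lemma unit_det (n : nat) (A : 'M[L]_n.+1) : \det A != 0 -> A \in unitmx.
Proof. by rewrite unitmxE unitfE. Qed.

Lemma Hcomm4 : HcommP S.
Proof.
move=> [A B] /=; rewrite /big4 /comm4 /det4 /= => /andP[_ /andP[/eqP dA /eqP dB]].
by rewrite !unit_det ?dA ?dB ?oner_neq0 // mulr1.
Qed.

Lemma Hdet4 : HdetP S.
Proof.
move=> t t0; exists (G4 (dg2 t 1) 1).
by rewrite /= /big4 /det4 /= !unit_det ?det_dg2 ?det1 ?mulr1 ?oner_neq0.
Qed.

Lemma Hdec4 : HdecP S.
Proof.
move=> [A B]; rewrite /big4 /= => /andP[Au Bu].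
have dA : \det A != 0 by rewrite -unitfE -unitmxE.
have dB : \det B != 0 by rewrite -unitfE -unitmxE.
have [al hal] := closed_root_r (\det A) (isT : (0 < 2)%N).
have [be hbe] := closed_root_r (\det B) (isT : (0 < 4)%N).
have al0 : al != 0 by apply: contraNneq dA => e; rewrite -hal e expr0n.
have be0 : be != 0 by apply: contraNneq dB => e; rewrite -hbe e expr0n.
pose A0 := al^-1 *: A; pose B0 := be^-1 *: B.
have AA : A = al *: A0 by rewrite /A0 scalerA divff // scale1r.
have BB : B = be *: B0 by rewrite /B0 scalerA divff // scale1r.
have dA0 : \det A0 = 1 by rewrite /A0 detZ exprVn hal mulVf.
have dB0 : \det B0 = 1 by rewrite /B0 detZ exprVn hbe mulVf.
exists (al * be ^+ 2), (G4 A0 B0); split.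
  by rewrite /= /big4 /comm4 /= !unit_det ?dA0 ?dB0 ?oner_neq0 ?eqxx.
split; first by rewrite /det4 /= exprMn -exprM hal hbe.
move=> a i /=; rewrite expr1 {1}AA {1}BB; exact: act4_scale.
Qed.

Lemma Hdiv4 : HdivP S.
Proof.
right; split => //; exists 1%N; split => // a.
exists (fun i : 'I_20 => nat_of_bool (i %/ 10 == 0)%N), (act4 (G4 1 1) a).
move=> s s0; pose A0 := dg2 s s^-1.
have dA0 : \det A0 = 1 by rewrite det_dg2 divff.
exists (G4 A0 1); split.
  by rewrite /= /big4 /comm4 /= !unit_det ?dA0 ?det1 ?oner_neq0 ?eqxx.
move=> i /=; rewrite expr1.
have := act4_scale s 1 A0 1 a i; rewrite expr1n mulr1 scale1r => <-.
rewrite act4_diag; last by move=> j k; exact: dg2_diag.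
rewrite dg2E; congr (_ * _).
have lt : (i %/ 10 < 2)%N by rewrite ltn_divLR.
have -> : (inord (i %/ 10) == ord0 :> 'I_2) = (i %/ 10 == 0)%N.
  by rewrite -val_eqE /= inordK.
by case: (i %/ 10 == 0)%N; rewrite ?expr1 ?expr0 ?divff // -expr2.
Qed.

Lemma Hconj4 : HconjP S.
Proof.
move=> h hc c c0; exists h; split => // a i /=.
exact: act4_lin.
Qed.

End H4.

Section N5.
Variable L : closedFieldType.
Local Notation PM := (fun e : L => e%:MP_[5]).

Lemma sandwich (k : {mpoly L[5]}) (A X : 'M[{mpoly L[5]}]_5) :
  (k *: A) *m X *m (k *: A)^T = (k * k) *: (A *m X *m A^T).
Proof.
by rewrite linearZ /= -scalemxAl -scalemxAr -scalemxAl scalerA.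
Qed.

Lemma act5_scale (al be : L) (A0 B0 : 'M[L]_5) a c :
  act5 (G5 (al *: A0) (be *: B0)) a c = (al ^+ 2 * be) * act5 (G5 A0 B0) a c.
Proof.
rewrite /act5 /=.
set Ah := map_mx PM A0.
set D := dtuple (fun _ : 'I_5 => be).
set Xh := map_mx (comp_mpoly (lsubst B0)) (altmx a).
have EA : map_mx PM (al *: A0) = al%:MP *: Ah.
  by apply/matrixP => i j; rewrite !mxE mpolyCM.
have EX : map_mx (comp_mpoly (lsubst (be *: B0))) (altmx a) = map_mx (comp_mpoly D) Xh.
  by apply/matrixP => i j; rewrite !mxE lsubst_scale comp_mpolyA.
have EAD : map_mx (comp_mpoly D) Ah = Ah.
  by apply/matrixP => i j; rewrite !mxE comp_mpolyC.
have EAT : map_mx (comp_mpoly D) Ah^T = Ah^T by rewrite -map_trmx EAD.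
rewrite EA EX sandwich -{1}EAT -{1}EAD -!map_mxM.
rewrite mxE -mpolyCM mcoeffCM mxE comp_diag_coef prod_const_mdeg mdeg1 expr1 -expr2 mulrA.
by [].
Qed.

Lemma altmx_scale (c : L) a : altmx (fun i => c * a i) = c%:MP *: altmx a.
Proof.
have lin p : linf (fun i => c * a i) p = c%:MP * linf a p.
  rewrite /linf mulr_sumr; apply: eq_bigr => i _; by rewrite mpolyCM mulrA.
apply/matrixP => i j; rewrite !mxE.
case: ifP => _; first exact: lin.
case: ifP => _; first by rewrite lin mulrN.
by rewrite mulr0.
Qed.

Lemma act5_lin (g : grp5 L) (c : L) a i :
  act5 g (fun i => c * a i) i = c * act5 g a i.
Proof.
rewrite /act5 /= altmx_scale.
have -> : map_mx (comp_mpoly (lsubst (g5B g))) (c%:MP *: altmx a) =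
  c%:MP *: map_mx (comp_mpoly (lsubst (g5B g))) (altmx a).
  by apply/matrixP => k l; rewrite !mxE compCM.
by rewrite -scalemxAr -scalemxAl mxE mcoeffCM.
Qed.

Lemma map_diag (d : 'rV[L]_5) : map_mx PM (diag_mx d) = diag_mx (map_mx PM d).
Proof. by apply/matrixP => i j; rewrite !mxE mpolyCMn. Qed.

Lemma map_one : map_mx PM (1%:M : 'M[L]_5) = 1%:M.
Proof.
apply/matrixP => i j; rewrite !mxE; case: (i == j); by rewrite ?mpolyC1 ?mpolyC0.
Qed.

Lemma act5_diag (d : 'rV[L]_5) B a c :
  act5 (G5 (diag_mx d) B) a c =
  d 0 (inord (nth (0, 0)%N pairs5 (c %/ 5)).1) * d 0 (inord (nth (0, 0)%N pairs5 (c %/ 5)).2)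
  * act5 (G5 1%:M B) a c.
Proof.
rewrite /act5 /= map_diag map_one trmx1 mulmx1 mul1mx tr_diag_mx mul_diag_mx mul_mx_diag.
rewrite !mxE; move: (_ \mPo lsubst B) => Y.
by rewrite mulrC mulrA -mpolyCM mcoeffCM [_ * d 0 _]mulrC.
Qed.

End N5.

Section H5.
Variable L : closedFieldType.
Local Notation S := (setting L 5).

Definition rw5 (x y : L) : 'rV[L]_5 := \row_(i < 5) (if i == ord0 then x else y).

Lemma det_dg5 x y : \det (diag_mx (rw5 x y)) = x * y ^+ 4.
Proof. by rewrite det_diag !big_ord_recr big_ord0 /= !mxE /= mul1r -!mulrA !exprS expr0 mulr1. Qed.

Lemma scale_dg5 (s x y : L) : s *: diag_mx (rw5 x y) = diag_mx (rw5 (s * x) (s * y)).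
Proof. by apply/matrixP => i j; rewrite !mxE mulrnAr; case: (i == ord0). Qed.

Lemma Hcomm5 : HcommP S.
Proof.
move=> [A B] /=; rewrite /big5 /comm5 /det5 /= => /andP[_ /andP[/eqP dA /eqP dB]].
by rewrite !unit_det ?dA ?dB ?oner_neq0 // expr1n mulr1.
Qed.

Lemma Hdet5 : HdetP S.
Proof.
move=> t t0; exists (G5 1 (diag_mx (rw5 t 1))).
by rewrite /= /big5 /det5 /= !unit_det ?det_dg5 ?det1 ?expr1n ?mul1r ?mulr1 ?oner_neq0.
Qed.

Lemma Hdec5 : HdecP S.
Proof.
move=> [A B]; rewrite /big5 /= => /andP[Au Bu].
have dA : \det A != 0 by rewrite -unitfE -unitmxE.
have dB : \det B != 0 by rewrite -unitfE -unitmxE.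
have [al hal] := closed_root_r (\det A) (isT : (0 < 5)%N).
have [be hbe] := closed_root_r (\det B) (isT : (0 < 5)%N).
have al0 : al != 0 by apply: contraNneq dA => e; rewrite -hal e expr0n.
have be0 : be != 0 by apply: contraNneq dB => e; rewrite -hbe e expr0n.
pose A0 := al^-1 *: A; pose B0 := be^-1 *: B.
have AA : A = al *: A0 by rewrite /A0 scalerA divff // scale1r.
have BB : B = be *: B0 by rewrite /B0 scalerA divff // scale1r.
have dA0 : \det A0 = 1 by rewrite /A0 detZ exprVn hal mulVf.
have dB0 : \det B0 = 1 by rewrite /B0 detZ exprVn hbe mulVf.
exists (al ^+ 2 * be), (G5 A0 B0); split.
  by rewrite /= /big5 /comm5 /= !unit_det ?dA0 ?dB0 ?oner_neq0 ?eqxx.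
split; first by rewrite /det5 /= exprMn -exprM mulnC exprM hal hbe.
move=> a i /=; rewrite expr1 {1}AA {1}BB; exact: act5_scale.
Qed.

Lemma Hdiv5 : HdivP S.
Proof.
right; split => //; exists 2%N; split => // a.
pose i1 (i : 'I_50) : 'I_5 := inord (nth (0, 0)%N pairs5 (i %/ 5)).1.
pose i2 (i : 'I_50) : 'I_5 := inord (nth (0, 0)%N pairs5 (i %/ 5)).2.
exists (fun i : 'I_50 => nat_of_bool (i1 i == ord0) + nat_of_bool (i2 i == ord0))%N.
exists (act5 (G5 1 1) a).
move=> s s0; pose A0 := diag_mx (rw5 (s ^+ 4) s^-1).
have dA0 : \det A0 = 1 by rewrite det_dg5 exprVn divff // expf_neq0.
exists (G5 A0 1); split.
  by rewrite /= /big5 /comm5 /= !unit_det ?dA0 ?det1 ?oner_neq0 ?eqxx.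
move=> i /=.
have := act5_scale s 1 A0 1 a i; rewrite mulr1 scale1r => <-.
rewrite scale_dg5 act5_diag !mxE -/(i1 i) -/(i2 i) exprD.
rewrite -exprS divff //.
by case: (i1 i == ord0); case: (i2 i == ord0); rewrite ?expr1 ?expr0.
Qed.

Lemma Hconj5 : HconjP S.
Proof.
move=> h hc c c0; exists h; split => // a i /=.
exact: act5_lin.
Qed.

End H5.

Section N1.
Variable L : closedFieldType.

Definition T1 (u r s t : L) : 2.-tuple {mpoly L[2]} :=
  [tuple (u ^+ 2)%:MP * 'X_(o 0) + r%:MP;
         (u ^+ 3)%:MP * 'X_(o 1) + (u ^+ 2 * s)%:MP * 'X_(o 0) + t%:MP].

Definition d1 (x y : L) : 'I_2 -> L := fun j => if (val j == 0)%N then x else y.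

Lemma o0_2 : (o 0 : 'I_2) = ord0. Proof. by apply/val_inj; rewrite /= inordK. Qed.
Lemma o1_2 : (o 1 : 'I_2) = ord_max. Proof. by apply/val_inj; rewrite /= inordK. Qed.

Lemma compX0 (t : 2.-tuple {mpoly L[2]}) : 'X_(o 0) \mPo t = tnth t ord0.
Proof. by rewrite comp_mpolyXU o0_2 -tnth_nth. Qed.
Lemma compX1 (t : 2.-tuple {mpoly L[2]}) : 'X_(o 1) \mPo t = tnth t ord_max.
Proof. by rewrite comp_mpolyXU o1_2 -tnth_nth. Qed.

Lemma T1_scale u r s t :
  T1 u r s t = [tuple tnth (T1 1 r s t) j \mPo dtuple (d1 (u ^+ 2) (u ^+ 3)) | j < 2].
Proof.
apply: eq_from_tnth => j; rewrite tnth_mktuple.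
case: j => [[|[|//]] hj].
- rewrite (_ : Ordinal hj = ord0); last exact: val_inj.
  rewrite /T1 [tnth _ ord0]/tnth /= !rmorphD !rmorphM /= !comp_mpolyC compX0 tnth_mktuple /d1 /= o0_2.
  ring.
- rewrite (_ : Ordinal hj = ord_max); last exact: val_inj.
  rewrite /T1 [tnth _ ord_max]/tnth /= !rmorphD !rmorphM /= !comp_mpolyC compX0 compX1 !tnth_mktuple /d1 /= o0_2 o1_2.
  ring.
Qed.

Lemma act1E (u r s t : L) a i : act1 (G1 u r s t) a i =
  let W' := u ^- 6 *: (W1 a \mPo T1 u r s t) in
  nth 0 [:: W'@_(mnm 2 [:: 1; 1]%N); - W'@_(mnm 2 [:: 2]%N);
            W'@_(mnm 2 [:: 0; 1]%N); - W'@_(mnm 2 [:: 1]%N);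
            - W'@_(mnm 2 [::])] i.
Proof. by []. Qed.

Lemma prod2 (x y : L) (m : 'X_{1..2}) :
  \prod_(j < 2) d1 x y j ^+ m j = x ^+ m ord0 * y ^+ m ord_max.
Proof.
rewrite !big_ord_recr big_ord0 /= mul1r.
by have -> : widen_ord (leqnSn 1) ord_max = ord0 :> 'I_2 by apply: val_inj.
Qed.

Lemma act1_scale (u r s t : L) a i : u != 0 ->
  act1 (G1 u r s t) a i = (u^-1) ^+ weights1 i * act1 (G1 1 r s t) a i.
Proof.
move=> u0; rewrite !act1E /= T1_scale -comp_mpolyA.
set V := W1 a \mPo T1 1 r s t.
rewrite expr1n invr1 scale1r.
case: i => [[|[|[|[|[|//]]]]] hi] /=;
  rewrite ?mcoeffN !mcoeffZ comp_diag_coef prod2 !mnmE /=; field; by rewrite ?expf_neq0.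
Qed.

Lemma w1o k : (k < 5)%N -> weights1 (o k) = nth 0%N [:: 1; 2; 3; 4; 6]%N k.
Proof. by move=> lt; rewrite /weights1 inordK. Qed.

Lemma W1_scale (c : L) a :
  W1 (fun i => c ^+ weights1 i * a i) \mPo dtuple (d1 (c ^+ 2) (c ^+ 3)) = c ^+ 6 *: W1 a.
Proof.
rewrite /W1 !rmorphB !rmorphD !rmorphM !rmorphXn /= !comp_mpolyC compX0 compX1 !tnth_mktuple.
rewrite /d1 /= !w1o //= o0_2 o1_2 -mul_mpolyC.
ring.
Qed.

Lemma dtuple_inv (c e : L) : c * e = 1 ->
  [tuple tnth (dtuple (d1 (c ^+ 2) (c ^+ 3))) j \mPo dtuple (d1 (e ^+ 2) (e ^+ 3)) | j < 2]
  = [tuple 'X_i | i < 2].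
Proof.
move=> ce; apply: eq_from_tnth => j; rewrite !tnth_mktuple compCM comp_mpolyXU -tnth_nth.
rewrite tnth_mktuple mulrA -mpolyCM /d1; case: ifP => _; by rewrite -exprMn ce expr1n mul1r.
Qed.

Lemma T1_comp (e r s t : L) :
  [tuple tnth (dtuple (d1 (e ^+ 2) (e ^+ 3))) j \mPo T1 1 r s t | j < 2]
  = T1 e (r * e ^+ 2) (s * e) (t * e ^+ 3).
Proof.
apply: eq_from_tnth => j; rewrite tnth_mktuple tnth_mktuple compCM comp_mpolyXU -tnth_nth.
case: j => [[|[|//]] hj].
- rewrite (_ : Ordinal hj = ord0); last exact: val_inj.
  rewrite /T1 /tnth /= o0_2 /d1 /=. ring.
- rewrite (_ : Ordinal hj = ord_max); last exact: val_inj.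
  rewrite /T1 /tnth /= o0_2 o1_2 /d1 /=. ring.
Qed.

Lemma act1_conj (c r s t : L) a i : c != 0 ->
  act1 (G1 1 r s t) (fun i => c ^+ weights1 i * a i) i =
  c ^+ weights1 i * act1 (G1 1 (r * c^-1 ^+ 2) (s * c^-1) (t * c^-1 ^+ 3)) a i.
Proof.
move=> c0; set e := c^-1.
have ce : c * e = 1 by rewrite /e divff.
have e0 : e != 0 by rewrite /e invr_eq0.
have -> : c ^+ weights1 i = e^-1 ^+ weights1 i by rewrite /e invrK.
rewrite -(act1_scale (r * e ^+ 2) (s * e) (t * e ^+ 3) a i e0).
rewrite !act1E.
suff -> : (1 ^- 6 *: (W1 (fun i => c ^+ weights1 i * a i) \mPo T1 1 r s t)) =
   (e ^- 6 *: (W1 a \mPo T1 e (r * e ^+ 2) (s * e) (t * e ^+ 3))) by [].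
rewrite expr1n invr1 scale1r.
rewrite -[W1 (fun i => _)]comp_mpoly_id -(dtuple_inv ce) -comp_mpolyA W1_scale.
rewrite !comp_mpolyZ comp_mpolyA T1_comp; congr (_ *: _).
by rewrite /e exprVn invrK.
Qed.

End N1.

Section H1.
Variable L : closedFieldType.
Local Notation S := (setting L 1).

Lemma Hcomm1 : HcommP S.
Proof.
move=> [u r s t] /=; rewrite /Defs.big1 /comm1 /det1 /= => /andP[-> /eqP ->].
by split => //; rewrite /Defs.det1 /= invr1.
Qed.

Lemma Hdet1 : HdetP S.
Proof.
move=> t t0; exists (G1 t^-1 0 0 0).
by rewrite /= /Defs.big1 /Defs.det1 /= invr_eq0 t0 invrK.
Qed.

Lemma Hdec1 : HdecP S.
Proof.
move=> [u r s t]; rewrite /= /Defs.big1 /= => u0.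
exists u^-1, (G1 1 r s t); split; first by rewrite /= /Defs.big1 /comm1 /= oner_neq0 eqxx.
split; first by rewrite expr1.
move=> a i /=; exact: act1_scale.
Qed.

Lemma Hdiv1 : HdivP S.
Proof. by left. Qed.

Lemma Hconj1 : HconjP S.
Proof.
move=> [u r s t]; rewrite /= /Defs.big1 /comm1 /= => /andP[_ /eqP ->] c c0.
exists (G1 1 (r * c ^+ 2) (s * c) (t * c ^+ 3)); split.
  by rewrite /= /Defs.big1 /comm1 /= oner_neq0 eqxx.
move=> a i; apply: (etrans (act1_conj (r * c ^+ 2) (s * c) (t * c ^+ 3) a i c0)).
have -> : r * c ^+ 2 * c^-1 ^+ 2 = r by field.
have -> : s * c * c^-1 = s by field.
by have -> : t * c ^+ 3 * c^-1 ^+ 3 = t by field.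
Qed.

End H1.

Section N2.
Variable L : closedFieldType.

Definition T2 (mu r0 r1 r2 : L) (B : 'M[L]_2) : 3.-tuple {mpoly L[3]} :=
  [tuple (B (o 0) (o 0))%:MP * 'X_(o 0) + (B (o 1) (o 0))%:MP * 'X_(o 1);
         (B (o 0) (o 1))%:MP * 'X_(o 0) + (B (o 1) (o 1))%:MP * 'X_(o 1);
         (mu^-1)%:MP * 'X_(o 2) + r0%:MP * 'X_(o 0) ^+ 2 + r1%:MP * 'X_(o 0) * 'X_(o 1)
           + r2%:MP * 'X_(o 1) ^+ 2].

Lemma act2E (mu r0 r1 r2 : L) B a i : act2 (G2 mu r0 r1 r2 B) a i =
  let W' := mu ^+ 2 *: (W2 a \mPo T2 mu r0 r1 r2 B) in
  nth 0 [:: W'@_(mnm 3 [:: 2; 0; 1]%N); W'@_(mnm 3 [:: 1; 1; 1]%N);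
            W'@_(mnm 3 [:: 0; 2; 1]%N); - W'@_(mnm 3 [:: 4; 0; 0]%N);
            - W'@_(mnm 3 [:: 3; 1; 0]%N); - W'@_(mnm 3 [:: 2; 2; 0]%N);
            - W'@_(mnm 3 [:: 1; 3; 0]%N); - W'@_(mnm 3 [:: 0; 4; 0]%N)] i.
Proof. by []. Qed.

Definition d3 (x y z : L) : 'I_3 -> L :=
  fun j => if (val j == 0)%N then x else if (val j == 1)%N then y else z.

Definition j0 : 'I_3 := ord0.
Definition j1 : 'I_3 := Ordinal (isT : (1 < 3)%N).
Definition j2 : 'I_3 := ord_max.

Lemma o0_3 : (o 0 : 'I_3) = j0. Proof. by apply/val_inj; rewrite /= inordK. Qed.
Lemma o1_3 : (o 1 : 'I_3) = j1. Proof. by apply/val_inj; rewrite /= inordK. Qed.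
Lemma o2_3 : (o 2 : 'I_3) = j2. Proof. by apply/val_inj; rewrite /= inordK. Qed.

Lemma compX3 (t : 3.-tuple {mpoly L[3]}) (k : 'I_3) : 'X_k \mPo t = tnth t k.
Proof. by rewrite comp_mpolyXU -tnth_nth. Qed.

Lemma prod3 (x y z : L) (m : 'X_{1..3}) :
  \prod_(j < 3) d3 x y z j ^+ m j = x ^+ m j0 * y ^+ m j1 * z ^+ m j2.
Proof.
rewrite !big_ord_recr big_ord0 /= mul1r.
have -> : widen_ord (leqnSn 2) (widen_ord (leqnSn 1) ord_max) = j0 by apply: val_inj.
by have -> : widen_ord (leqnSn 2) ord_max = j1 by apply: val_inj.
Qed.

Lemma T2_scale (mu lam r0 r1 r2 : L) (B0 : 'M[L]_2) :
  T2 mu (r0 * lam ^+ 2) (r1 * lam ^+ 2) (r2 * lam ^+ 2) (lam *: B0) =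
  [tuple tnth (T2 1 r0 r1 r2 B0) j \mPo dtuple (d3 lam lam mu^-1) | j < 3].
Proof.
apply: eq_from_tnth => j; rewrite tnth_mktuple.
rewrite /T2 !o0_3 !o1_3 !o2_3 !mxE.
case: j => [[|[|[|//]]] hj].
- rewrite (_ : Ordinal hj = j0); last exact: val_inj.
  rewrite /tnth /= !rmorphD !rmorphM /= !comp_mpolyC !compX3 !tnth_mktuple /d3 /=. ring.
- rewrite (_ : Ordinal hj = j1); last exact: val_inj.
  rewrite /tnth /= !rmorphD !rmorphM /= !comp_mpolyC !compX3 !tnth_mktuple /d3 /=. ring.
- rewrite (_ : Ordinal hj = j2); last exact: val_inj.
  rewrite /tnth /= invr1 !rmorphD !rmorphM /= !comp_mpolyC !compX3 !tnth_mktuple /d3 /=. ring.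
Qed.

Lemma act2_scale (mu lam r0 r1 r2 : L) (B0 : 'M[L]_2) a i : mu != 0 ->
  act2 (G2 mu (r0 * lam ^+ 2) (r1 * lam ^+ 2) (r2 * lam ^+ 2) (lam *: B0)) a i =
  (mu * lam ^+ 2) ^+ weights2 i * act2 (G2 1 r0 r1 r2 B0) a i.
Proof.
move=> mu0; rewrite !act2E /= T2_scale -comp_mpolyA.
set V := W2 a \mPo T2 1 r0 r1 r2 B0.
rewrite expr1n scale1r.
case: i => [[|[|[|[|[|[|[|[|//]]]]]]]] hi] /=;
  rewrite ?mcoeffN !mcoeffZ comp_diag_coef prod3 !mnmE /=; field; by rewrite ?expf_neq0.
Qed.

Lemma w2o k : (k < 8)%N -> weights2 (o k) = nth 0%N [:: 1; 1; 1; 2; 2; 2; 2; 2]%N k.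
Proof. by move=> lt; rewrite /weights2 inordK. Qed.

Lemma W2_scale (c : L) a :
  W2 (fun i => c ^+ weights2 i * a i) \mPo dtuple (d3 1 1 c) = c ^+ 2 *: W2 a.
Proof.
rewrite /W2 !(rmorphB, rmorphD, rmorphM, rmorphXn) /= !comp_mpolyC !compX3 !tnth_mktuple.
rewrite !w2o //= !o0_3 !o1_3 !o2_3 /d3 /= -mul_mpolyC.
ring.
Qed.

Lemma dtuple_inv3 (c e : L) : c * e = 1 ->
  [tuple tnth (dtuple (d3 1 1 c)) j \mPo dtuple (d3 1 1 e) | j < 3] = [tuple 'X_i | i < 3].
Proof.
move=> ce; apply: eq_from_tnth => j; rewrite !tnth_mktuple compCM compX3.
rewrite tnth_mktuple mulrA -mpolyCM /d3; case: ifP => _; first by rewrite mulr1 mul1r.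
by case: ifP => _; rewrite ?ce ?mulr1 mul1r.
Qed.

Lemma T2_comp (c r0 r1 r2 : L) B : c != 0 ->
  [tuple tnth (dtuple (d3 1 1 c^-1)) j \mPo T2 1 (c * r0) (c * r1) (c * r2) B | j < 3]
  = T2 c r0 r1 r2 B.
Proof.
move=> c0; have ce' : c%:MP * (c^-1)%:MP = 1 :> {mpoly L[3]} by rewrite -mpolyCM divff.
apply: eq_from_tnth => j; rewrite tnth_mktuple tnth_mktuple compCM compX3.
rewrite /T2 !o0_3 !o1_3 !o2_3.
case: j => [[|[|[|//]]] hj].
- rewrite (_ : Ordinal hj = j0); last exact: val_inj.
  rewrite /tnth /= /d3 /=. ring.
- rewrite (_ : Ordinal hj = j1); last exact: val_inj.
  rewrite /tnth /= /d3 /=. ring.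
- rewrite (_ : Ordinal hj = j2); last exact: val_inj.
  rewrite /tnth /= /d3 /= invr1 !mpolyCM. ring: ce'.
Qed.

Lemma act2_conj (c r0 r1 r2 : L) B a i : c != 0 ->
  act2 (G2 1 (c * r0) (c * r1) (c * r2) B) (fun i => c ^+ weights2 i * a i) i =
  c ^+ weights2 i * act2 (G2 1 r0 r1 r2 B) a i.
Proof.
move=> c0.
have := act2_scale 1 r0 r1 r2 B a i c0; rewrite expr1n !mulr1 scale1r => <-.
rewrite !act2E.
suff -> : (1 ^+ 2 *: (W2 (fun i => c ^+ weights2 i * a i) \mPo T2 1 (c * r0) (c * r1) (c * r2) B)) =
   (c ^+ 2 *: (W2 a \mPo T2 c r0 r1 r2 B)) by [].
have ce : c * c^-1 = 1 by rewrite divff.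
rewrite expr1n scale1r.
rewrite -[W2 (fun i => _)]comp_mpoly_id -(dtuple_inv3 ce) -comp_mpolyA W2_scale.
by rewrite !comp_mpolyZ comp_mpolyA T2_comp.
Qed.

End N2.

Section H2.
Variable L : closedFieldType.
Local Notation S := (setting L 2).

Lemma Hcomm2 : HcommP S.
Proof.
move=> [mu r0 r1 r2 B] /=; rewrite /big2 /comm2 /det2 /= => /andP[_ /andP[/eqP -> /eqP dB]].
by rewrite oner_neq0 unit_det ?dB ?oner_neq0 // mulr1.
Qed.

Lemma Hdet2 : HdetP S.
Proof.
move=> t t0; exists (G2 t 0 0 0 1).
by rewrite /= /big2 /det2 /= t0 unitmx1 det1 mulr1.
Qed.

Lemma Hdec2 : HdecP S.
Proof.
move=> [mu r0 r1 r2 B]; rewrite /= /big2 /= => /andP[mu0 Bu].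
have dB : \det B != 0 by rewrite -unitfE -unitmxE.
have [lam hl] := closed_root_r (\det B) (isT : (0 < 2)%N).
have l0 : lam != 0 by apply: contraNneq dB => e; rewrite -hl e expr0n.
pose B0 := lam^-1 *: B.
have BB : B = lam *: B0 by rewrite /B0 scalerA divff // scale1r.
have dB0 : \det B0 = 1 by rewrite /B0 detZ exprVn hl mulVf.
have l2 : lam ^+ 2 != 0 by rewrite expf_neq0.
have rr (x : L) : x = x * (lam ^+ 2)^-1 * lam ^+ 2 by rewrite mulfVK.
exists (mu * lam ^+ 2), (G2 1 (r0 * (lam ^+ 2)^-1) (r1 * (lam ^+ 2)^-1) (r2 * (lam ^+ 2)^-1) B0).
split; first by rewrite /= /big2 /comm2 /= oner_neq0 unit_det ?dB0 ?oner_neq0 ?eqxx.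
split; first by rewrite expr1 /det2 /= hl.
move=> a i.
have := act2_scale lam (r0 * (lam ^+ 2)^-1) (r1 * (lam ^+ 2)^-1) (r2 * (lam ^+ 2)^-1) B0 a i mu0.
rewrite -!rr -BB; exact.
Qed.

Lemma Hdiv2 : HdivP S.
Proof. by left. Qed.

Lemma Hconj2 : HconjP S.
Proof.
move=> [mu r0 r1 r2 B]; rewrite /= /big2 /comm2 /= => /andP[/andP[_ Bu] /andP[/eqP -> dB]] c c0.
exists (G2 1 (c * r0) (c * r1) (c * r2) B); split.
  by rewrite /= /big2 /comm2 /= oner_neq0 Bu dB eqxx.
move=> a i; exact: act2_conj.
Qed.

End H2.


Unset Implicit Arguments.
Set Strict Implicit.

Theorem lemma4p3 (K : fieldType) (L : closedFieldType)
    (iota : {rmorphism K -> L})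
    (K_perfect : perfect_field K) (L_alg : algebraic_over iota)
    (n : nat) (Hn : (1 <= n <= 5)%N) :
  let S := setting L n in
  (* every nonzero homogeneous invariant of degree d is an invariant of
     weight k, where d = gs_r S * k  (r = 1, 1, 1, 2, 5) *)
  (forall (d : nat) (F : {mpoly K[gs_N S]}),
      F \is d.-homog for (wmeasure (gs_w S)) -> is_Ginv iota S F -> F != 0 ->
      exists k : nat, d = (gs_r S * k)%N /\ is_weight_inv iota S k F)
  (* K[X_n]^{G_n} = (+)_{k >= 0} K[X_n]^{G_n}_k : *)
  /\ (forall (k : nat) (F : {mpoly K[gs_N S]}),
        is_weight_inv iota S k F -> is_Ginv iota S F)
  /\ (forall F : {mpoly K[gs_N S]}, is_Ginv iota S F ->
        exists (M : nat) (Fk : nat -> {mpoly K[gs_N S]}),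
          (forall k, is_weight_inv iota S k (Fk k)) /\
          F = \sum_(k < M) Fk k)
  /\ (forall (M : nat) (Fk : nat -> {mpoly K[gs_N S]}),
        (forall k, is_weight_inv iota S k (Fk k)) ->
        \sum_(k < M) Fk k = 0 -> forall k, (k < M)%N -> Fk k = 0).
Proof.
move=> S; rewrite /S; clear S.
case: n Hn => [|[|[|[|[|[|n]]]]]] // _.
- exact: (all_parts iota (@Hcomm1 L) (@Hdet1 L) isT (@Hdec1 L) (@Hdiv1 L) (@Hconj1 L)).
- exact: (all_parts iota (@Hcomm2 L) (@Hdet2 L) isT (@Hdec2 L) (@Hdiv2 L) (@Hconj2 L)).
- exact: (all_parts iota (@Hcomm3 L) (@Hdet3 L) isT (@Hdec3 L) (@Hdiv3 L) (@Hconj3 L)).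
- exact: (all_parts iota (@Hcomm4 L) (@Hdet4 L) isT (@Hdec4 L) (@Hdiv4 L) (@Hconj4 L)).
- exact: (all_parts iota (@Hcomm5 L) (@Hdet5 L) isT (@Hdec5 L) (@Hdiv5 L) (@Hconj5 L)).
Qed.
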